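(* Let $n=2p$ and let $B$ be a skew-symmetric $n\times n$ matrix such that $JB$ is a regular skew-Hamiltonian matrix. Then $$\{JA:\ A\in\Lambda^2V,\ [JA,JB]=0\}=\langle (JB)^k:\ k=0,\dots,p-1\rangle,$$ and this space has dimension $p=n/2$.
   Context: $V=\mathbb C^n$, $n=2p$, $\Lambda^2V$ (resp. $S^2V$) = skew-symmetric (resp. symmetric) $n\times n$ complex matrices, $J=\begin{bmatrix}0&I_p\\-I_p&0\end{bmatrix}$, $[X,Y]=XY-YX$. A matrix $W$ is skew-Hamiltonian if $JW={}^tWJ$, equivalently $W=JB$ with $B$ skew-symmetric. Every skew-Hamiltonian $W$ is conjugate by a symplectic matrix $M\in\mathrm{Sp}(n)$ to a matrix $\begin{bmatrix}P&0\\0&{}^tP\end{bmatrix}$ with $P$ a $p\times p$ matrix; $W$ is called regular if the minimal polynomial of such a $P$ has degree $p$ (i.e. equals its characteristic polynomial). *)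

(* Defs.v *)
From HB Require Import structures.
From mathcomp Require Import all_boot all_order all_algebra.
Set Implicit Arguments. Unset Strict Implicit. Unset Printing Implicit Defensive.
Import Order.TTheory GRing.Theory Num.Theory.
Local Open Scope ring_scope.

Definition Jmx (F : fieldType) (q : nat) : 'M[F]_(q + q) :=
  block_mx 0 1%:M (- 1%:M) 0.

(* skew-symmetric matrices (elements of Lambda^2 V) *)
Definition skew_sym (F : fieldType) (m : nat) (A : 'M[F]_m) : Prop :=
  A^T = - A.

Definition skew_hamiltonian (F : fieldType) (q : nat) (W : 'M[F]_(q + q)) : Prop :=
  Jmx F q *m W = W^T *m Jmx F q.

Definition symplectic (F : fieldType) (q : nat) (M : 'M[F]_(q + q)) : Prop :=
  M^T *m Jmx F q *m M = Jmx F q.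

Definition regular_skew_hamiltonian (F : fieldType) (p : nat)
    (W : 'M[F]_(p.+1 + p.+1)) : Prop :=
  skew_hamiltonian W /\
  exists (M : 'M[F]_(p.+1 + p.+1)) (P : 'M[F]_p.+1),
    [/\ symplectic M, M \in unitmx,
        invmx M *m W *m M = block_mx P 0 0 P^T
      & (size (mxminpoly P)).-1 = p.+1].

(* The span of the powers W^k, k = 0..q-1, as a row-space of vectorised
   matrices (one row mxvec (W^k) per k). *)
Definition powers_span (F : fieldType) (m q : nat) (W : 'M[F]_m) : 'M[F]_(q, m * m) :=
  \matrix_(k < q) mxvec (W ^+ k).

(* Main.v *)
Require Import Defs.
From HB Require Import structures.
From mathcomp Require Import all_boot all_order all_algebra.
Set Implicit Arguments. Unset Strict Implicit. Unset Printing Implicit Defensive.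
Import Order.TTheory GRing.Theory Num.Theory.
Local Open Scope ring_scope.

Section S.
Variable F : fieldType.

Lemma horner_tr n (A : 'M[F]_n.+1) p : (horner_mx A p)^T = horner_mx A^T p.
Proof.
elim/poly_ind: p => [|p c IH]; first by rewrite !rmorph0 trmx0.
rewrite !(rmorphD, rmorphM)/= !(horner_mx_X, horner_mx_C) linearD /= tr_scalar_mx.
rewrite trmx_mul IH; congr (_ + _).
exact: (comm_mx_horner p (erefl (A^T *m A^T))).
Qed.

Definition Kry n m (A : 'M[F]_n) (w : 'rV_n) : 'M_(m, n) := \matrix_(k < m) (w *m A ^+ k).

Lemma kryE n m (A : 'M[F]_n.+1) (w : 'rV_n.+1) (v : 'rV_m) :
  w *m horner_mx A (rVpoly v) = v *m Kry m A w.
Proof.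
rewrite [rVpoly v]poly_def linear_sum /= mulmx_sumr [RHS]mulmx_sum_row. apply: eq_bigr => i _ /=.
by rewrite valK /= linearZ rmorphXn/= horner_mx_X rowK -scalemxAr.
Qed.

Lemma horner_lt n m (a : 'M[F]_n.+1) (c : 'M[F]_(m.+1, n.+1)) (d : 'M[F]_m.+1) p :
  exists s, (c = 0 -> s = 0) /\
  horner_mx (block_mx a 0 c d : 'M_(n.+1 + m.+1)) p =
    block_mx (horner_mx a p) 0 s (horner_mx d p).
Proof.
elim/poly_ind: p => [|p k [s [Hs IH]]].
  by exists 0; split => //; rewrite !rmorph0 block_mx0.
exists (s *m a + horner_mx d p *m c); split.
  by move=> c0; rewrite c0 Hs // mul0mx mulmx0 addr0.
rewrite !(rmorphD, rmorphM)/= !(horner_mx_X, horner_mx_C) IH.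
rewrite [X in _ + X](scalar_mx_block n.+1 m.+1).
rewrite (_ : block_mx (horner_mx a p) 0 s (horner_mx d p) * block_mx a 0 c d =
  block_mx (horner_mx a p *m a + 0 *m c) (horner_mx a p *m 0 + 0 *m d)
           (s *m a + horner_mx d p *m c) (s *m 0 + horner_mx d p *m d)); last first.
  exact: mulmx_block.
rewrite !mul0mx !mulmx0 !addr0 add0r.
transitivity (block_mx (horner_mx a p *m a + k%:M) (0 + 0 : 'M_(n.+1, m.+1))
   (s *m a + horner_mx d p *m c + 0) (horner_mx d p *m d + k%:M)).
  have E := add_block_mx (horner_mx a p *m a) 0 (s *m a + horner_mx d p *m c) (horner_mx d p *m d) k%:M 0 0 k%:M; simpl in E; exact E.
by rewrite !addr0.
Qed.

Definition Reg N (A : 'M[F]_N.+1) :=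
  forall q, horner_mx A q = 0 -> q = 0 \/ (N.+1 < size q)%N.

Lemma cycP N (A : 'M[F]_N.+1) (w : 'rV_N.+1) :
  Kry N.+1 A w \in unitmx <->
  (forall v : 'rV_N.+1, w *m horner_mx A (rVpoly v) = 0 -> v = 0).
Proof.
rewrite -row_free_unit; split.
  move=> fr v; rewrite kryE => H; apply: (row_free_inj fr); by rewrite H mul0mx.
move=> H; rewrite -kermx_eq0; apply/rowV0P => v /sub_kermxP.
by rewrite -kryE => /H.
Qed.

Lemma cyc_conj N (P : 'M[F]_N.+1) (S : 'M[F]_N.+1) (w : 'rV_N.+1) :
  S \in unitmx -> Kry N.+1 (S *m P *m invmx S) w \in unitmx ->
  Kry N.+1 P (w *m S) \in unitmx.
Proof.
move=> Su /cycP H; apply/cycP => v Hv; apply: H.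
rewrite horner_mx_uconj // !mulmxA Hv mul0mx //.
Qed.
Lemma trX n (A : 'M[F]_n) k : (A ^+ k)^T = A^T ^+ k.
Proof.
elim: k => [|k IH]; first by rewrite !expr0 trmx1.
by rewrite exprS exprSr -[A * _]/(A *m _) trmx_mul IH.
Qed.

Lemma entry_tr m n k (A : 'M[F]_(m, n)) (B : 'M[F]_n) (C : 'M[F]_(k, n)) i j :
  (A *m B *m C^T) i j = (row i A *m B *m (row j C)^T) 0 0.
Proof.
rewrite !mxE; apply: eq_bigr => l _; rewrite !mxE; congr (_ * _).
by apply: eq_bigr => t _; rewrite !mxE.
Qed.

Lemma com_poly N (P : 'M[F]_N.+1) w (Kw : Kry N.+1 P w \in unitmx)
   (X : 'M[F]_N.+1) : X *m P = P *m X -> exists v : 'rV_N.+1, X = horner_mx P (rVpoly v).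
Proof.
move=> XP.
have : (w *m X <= Kry N.+1 P w)%MS by rewrite submx_full // row_full_unit.
case/submxP => v Hv; exists v.
set Y := horner_mx P (rVpoly v).
have wY : w *m X = w *m Y by rewrite Hv kryE.
have YP : Y *m P = P *m Y by apply: comm_horner_mx.
rewrite -(mulKmx Kw X) -(mulKmx Kw Y); congr (_ *m _).
apply/row_matrixP => i; rewrite !row_mul rowK -!mulmxA.
have XPi : GRing.comm X (P ^+ i) by apply: commrX.
have YPi : GRing.comm Y (P ^+ i) by apply: commrX.
rewrite -[P ^+ i *m X]/(P ^+ i * X) -XPi -[P ^+ i *m Y]/(P ^+ i * Y) -YPi !mulmxA wY //.
Qed.
End S.

Section Cyc.
Variable F : closedFieldType.

Lemma cyc_ex N (P : 'M[F]_N.+1) : Reg P -> exists w, Kry N.+1 P w \in unitmx.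
Proof.
elim: N P => [|N IHN] P RP.
  exists 1%:M; rewrite (_ : Kry 1 P 1%:M = 1%:M) ?unitmx1 //.
  by apply/matrixP => i j; rewrite !ord1 !mxE big_ord1 expr0 !mxE eqxx mulr1.
have [l rl] : exists l, root (char_poly P) l.
  by apply/closed_rootP; rewrite size_char_poly.
have /eigenvalueP [u uP u0] : eigenvalue P l by rewrite eigenvalue_root_char.
pose U : 'rV[F]_(N.+2) := delta_mx 0 0.
have UUt : U *m U^T = 1%:M.
  by rewrite /U trmx_delta mul_delta_mx; apply/matrixP => i j; rewrite !ord1 !mxE.
have U0 : U != 0.
  apply/eqP => /matrixP /(_ 0 0); rewrite !mxE eqxx /= => /eqP; by rewrite oner_eq0.
have [S Su US] : {S : 'M_(N.+2) | S \in unitmx & U *m (U^T *m u) = U *m S}.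
  apply: complete_unitmx.
  by rewrite mulmxA UUt mul1mx !rank_rV U0 u0.
have Uu : U *m S = u by rewrite -US mulmxA UUt mul1mx.
have [Q Qdef] : exists Q : 'M[F]_(N.+2), Q = S *m P *m invmx S by eexists.
have UQ : U *m Q = l *: U.
  by rewrite Qdef !mulmxA Uu uP -scalemxAl -Uu mulmxK.
have rowQ : forall j, Q 0 j = l * U 0 j.
  move=> j; move/matrixP: UQ => /(_ 0 j); rewrite /U -rowE !mxE => ->.
  by [].
pose Qb : 'M[F]_(1 + N.+1) := Q.
pose c := dlsubmx Qb; pose d := drsubmx Qb.
have QE : Q = block_mx (l%:M : 'M_1) 0 c d.
  have Hul : ulsubmx Qb = l%:M.
    apply/matrixP => i j; rewrite !ord1 !mxE /Qb.
    rewrite (_ : (lshift N.+1 (0 : 'I_1) : 'I_N.+2) = 0); last by apply: val_inj.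
    by rewrite rowQ /U mxE eqxx mulr1.
  have Hur : ursubmx Qb = 0.
    apply/matrixP => i j; rewrite !ord1 !mxE /Qb.
    rewrite (_ : (lshift N.+1 (0 : 'I_1) : 'I_N.+2) = 0); last by apply: val_inj.
    by rewrite rowQ /U mxE andTb (_ : (rshift 1 j == 0 :> 'I_N.+2) = false) ?mulr0.
  by rewrite -[Q]/Qb -{1}(submxK Qb) Hul Hur.
have RQ : Reg Q.
  move=> q; rewrite Qdef horner_mx_uconj // => H; apply: RP.
  by move: H => /(congr1 (fun M => invmx S *m M *m S)); rewrite !mulmxA mulVmx // mul1mx mulmxKV // mulmx0 mul0mx.
have HQ : forall q, horner_mx d q = 0 ->
    exists (h : 'M_1) (s : 'cV_N.+1), horner_mx Q q = (block_mx h 0 s 0 : 'M_(1 + N.+1)) /\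
                horner_mx Q q *m Q = l *: horner_mx Q q.
  move=> q hq; have [s [_ Hs]] := horner_lt (l%:M : 'M_1) c d q.
  exists (horner_mx l%:M q), s; split; first by rewrite QE Hs hq.
  rewrite QE Hs hq.
  rewrite (_ : block_mx (horner_mx l%:M q) 0 s 0 *m block_mx l%:M 0 c d =
    block_mx (horner_mx l%:M q *m l%:M + 0 *m c) (horner_mx l%:M q *m 0 + 0 *m d)
           (s *m l%:M + 0 *m c) (s *m 0 + 0 *m d)); last exact: mulmx_block.
  rewrite !mul0mx !mulmx0 !addr0 !mul_mx_scalar.
  have E := scale_block_mx l (horner_mx (l%:M : 'M_1) q) (0 : 'M_(1, N.+1)) s (0 : 'M_N.+1).
  simpl in E; rewrite !scaler0 in E; exact (esym E).
have Rd : Reg d.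
  move=> q hq; have [h [s [HQq HQQ]]] := HQ q hq.
  have : horner_mx Q (q * ('X - l%:P)) = 0.
    rewrite rmorphM rmorphB /= horner_mx_X horner_mx_C -mulmxE mulmxBr HQQ.
    by rewrite mul_mx_scalar subrr.
  have [->|q0] := eqVneq q 0; first by left.
  case/RQ => [/eqP|]; first by rewrite mulf_eq0 polyXsubC_eq0 orbF (negPf q0).
  by rewrite size_Mmonic ?monicXsubC // size_XsubC addn2 /= => H; right.
have [w' Kw'] := IHN d Rd.
pose m' := char_poly d.
have m'0 : m' != 0 by rewrite monic_neq0 // char_poly_monic.
have sm' : size m' = N.+2 by rewrite size_char_poly.
have [h [s [HH HHQ]]] := HQ m' (Cayley_Hamilton d).
have H0 : horner_mx Q m' != 0.
  apply/eqP => /RQ [/eqP|]; first by rewrite (negPf m'0).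
  by rewrite sm' ltnn.
have QH : Q *m horner_mx Q m' = horner_mx Q m' *m Q by apply: comm_mx_horner.
have Hcs : c *m h + d *m s = l *: s.
  move: QH; rewrite HHQ HH QE.
  have E1 := mulmx_block (l%:M : 'M_1) (0 : 'M_(1, N.+1)) c d h (0 : 'M_(1, N.+1)) s (0 : 'M_N.+1).
  rewrite E1.
  have E := scale_block_mx l h (0 : 'M_(1, N.+1)) s (0 : 'M_N.+1).
  simpl in E; rewrite E.
  by move=> E2; have [_ _ -> _] := @eq_block_mx _ 1 N.+1 1 N.+1 _ _ _ _ _ _ _ _ E2.
pose x : 'M[F]_1 := if w' *m s == 0 then 1%:M else 0.
have beta0 : x *m h + w' *m s != 0.
  rewrite /x; have [ws0|ws0] := eqVneq (w' *m s) 0; last by rewrite mul0mx add0r.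
  rewrite ws0 addr0 mul1mx; apply/eqP => h0.
  move: Hcs; rewrite h0 mulmx0 add0r => ds.
  have dks : forall k, d ^+ k *m s = l ^+ k *: s.
    elim=> [|k IHk]; first by rewrite !expr0 mul1mx scale1r.
    by rewrite exprSr -mulmxE -mulmxA ds -scalemxAr IHk scalerA exprSr mulrC.
  have s0 : s = 0.
    have Ks : Kry N.+1 d w' *m s = 0.
      apply/row_matrixP => i; rewrite row_mul rowK row0 -mulmxA dks -scalemxAr ws0.
      by rewrite scaler0.
    by rewrite -(mulKmx Kw' s) Ks mulmx0.
  by move/eqP: H0; rewrite HH h0 s0 block_mx0.
pose w : 'rV[F]_(1 + N.+1) := row_mx x w'.
have KQ : Kry N.+2 Q w \in unitmx.
  apply/cycP => v Hv.
  pose q := rVpoly v.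
  have [sq [_ Hq]] := horner_lt (l%:M : 'M_1) c d q.
  have Hdq : w' *m horner_mx d q = 0.
    move: Hv; rewrite -/q QE Hq /w.
    have E3 := mul_row_block x w' (horner_mx (l%:M : 'M_1) q) (0 : 'M_(1, N.+1)) sq (horner_mx d q).
    rewrite E3 => /(congr1 (@rsubmx _ 1 1 N.+1)); rewrite row_mxKr mulmx0 add0r => ->.
    by apply/matrixP => i j; rewrite !mxE.
  have sq_le : (size q <= N.+2)%N by exact: size_poly.
  have r0 : q %% m' = 0.
    have sr : leq (size (q %% m')) N.+1 by rewrite -ltnS -sm' ltn_modpN0.
    have : w' *m horner_mx d (rVpoly (poly_rV (q %% m') : 'rV_N.+1)) = 0.
      rewrite poly_rV_K // -Hdq [in RHS](divp_eq q m') rmorphD rmorphM /=.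
      by rewrite (Cayley_Hamilton d : horner_mx d m' = 0) mulr0 add0r.
    move/(proj1 (cycP d w') Kw') => /(congr1 rVpoly); rewrite poly_rV_K // => ->.
    exact: linear0.
  have qdiv : q %/ m' = ((q %/ m')`_0)%:P.
    by apply: size1_polyC; rewrite size_divp // sm' /= leq_subLR addn1.
  have qE : q = ((q %/ m')`_0) *: m'.
    by rewrite {1}(divp_eq q m') r0 addr0 {1}qdiv mul_polyC.
  move: Hv; rewrite -/q qE horner_mxZ -scalemxAr HH /w.
  have E5 := mul_row_block x w' h (0 : 'M_(1, N.+1)) s (0 : 'M_N.+1).
  rewrite E5 => /(congr1 (fun M : 'rV_(1 + N.+1) => M 0 (lshift N.+1 0))).
  rewrite [LHS]mxE (@row_mxEl _ 1 1 N.+1) [RHS]mxE => /eqP; rewrite mulf_eq0 => /orP [/eqP k0|].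
    by rewrite -(rVpolyK v) -/q qE k0 scale0r linear0.
  move=> /eqP b0; case/eqP: beta0; apply/matrixP => i j; by rewrite !ord1 b0 mxE.
by exists (w *m S); apply: cyc_conj Su _; rewrite -Qdef.
Qed.
End Cyc.


Section Sk.
Variable F : numFieldType.

Lemma skew0 N (Q Y : 'M[F]_N.+1) w : Kry N.+1 Q w \in unitmx ->
  Y^T = - Y -> Y *m Q^T = Q *m Y -> Y = 0.
Proof.
move=> Kw Ysk YQ.
have QkY : forall k, Q ^+ k *m Y = Y *m Q^T ^+ k.
  elim=> [|k IH]; first by rewrite !expr0 mul1mx mulmx1.
  rewrite exprS -[Q * _]/(Q *m _) -mulmxA IH mulmxA -YQ -mulmxA.
  by rewrite -[Q^T *m _]/(Q^T * _) -exprS.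
set K := Kry N.+1 Q w.
have Tsym : (K *m Y *m K^T)^T = K *m Y *m K^T.
  apply/matrixP => i j; rewrite [LHS]mxE [LHS]entry_tr [RHS]entry_tr !rowK !trmx_mul !trX -!mulmxA !(mulmxA Y) -!QkY !mulmxA.
  by rewrite -!(mulmxA w) -[Q ^+ j *m Q ^+ i]/(Q ^+ j * Q ^+ i) -[Q ^+ i *m Q ^+ j]/(Q ^+ i * Q ^+ j) -!exprD addnC.
have Tneg : (K *m Y *m K^T)^T = - (K *m Y *m K^T).
  by rewrite !trmx_mul trmxK Ysk mulNmx mulmxN mulmxA.
have T0 : K *m Y *m K^T = 0.
  move: Tneg; rewrite Tsym; move: (K *m Y *m K^T) => T eT.
  apply/matrixP => i j; move/matrixP: eT => /(_ i j).
  rewrite [in RHS]mxE => e; have : T i j *+ 2 == 0 by rewrite mulr2n {1}e addNr.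
  by rewrite mulrn_eq0 /= => /eqP ->; rewrite mxE.
have KT : K^T \in unitmx by rewrite unitmx_tr.
have : Y *m K^T = 0 by rewrite -(mulKmx Kw (Y *m K^T)) (mulmxA K) T0 mulmx0.
by move=> /(congr1 (mulmx^~ (invmx K^T))); rewrite mulmxK // mul0mx.
Qed.
End Sk.

Section Main.
Variable F : fieldType.

Lemma JJ q : Jmx F q *m Jmx F q = - 1%:M.
Proof.
rewrite /Jmx mulmx_block !mul0mx !mulmx0 !add0r !addr0 mulmxN mul1mx mulNmx mul1mx.
by rewrite (scalar_mx_block q q 1) opp_block_mx oppr0.
Qed.

Lemma JtrE q : (Jmx F q)^T = - Jmx F q.
Proof.
by rewrite /Jmx tr_block_mx !trmx0 trmx1 linearN /= trmx1 opp_block_mx !oppr0 opprK.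
Qed.

Lemma skewH_horner n (J W : 'M[F]_n.+1) g : J *m W = W^T *m J ->
  J *m horner_mx W g = horner_mx W^T g *m J.
Proof.
move=> JW; elim/poly_ind: g => [|g c IH]; first by rewrite !rmorph0 mulmx0 mul0mx.
rewrite !(rmorphD, rmorphM)/= !(horner_mx_X, horner_mx_C) mulmxDr mulmxDl.
rewrite -[_ * W]/(_ *m W) -[_ * W^T]/(_ *m W^T) mulmxA IH -mulmxA JW mulmxA.
by rewrite scalar_mxC.
Qed.

Lemma conj_inj n (M X Y : 'M[F]_n) : M \in unitmx ->
  invmx M *m X *m M = invmx M *m Y *m M -> X = Y.
Proof.
move=> Mu /(congr1 (fun Z => M *m Z *m invmx M)).
by rewrite !mulmxA !mulmxV // !mul1mx !mulmxK.
Qed.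
End Main.

Unset Implicit Arguments.
Theorem mainTheorem7 (F : numClosedFieldType) (p : nat)
    (B : 'M[F]_(p.+1 + p.+1)) :
  skew_sym B ->
  regular_skew_hamiltonian (Jmx F p.+1 *m B) ->
  (forall X : 'M[F]_(p.+1 + p.+1),
     (exists A : 'M[F]_(p.+1 + p.+1),
        [/\ skew_sym A,
            X = Jmx F p.+1 *m A
          & (Jmx F p.+1 *m A) *m (Jmx F p.+1 *m B)
            = (Jmx F p.+1 *m B) *m (Jmx F p.+1 *m A)])
     <-> (X \in powers_span p.+1 (Jmx F p.+1 *m B))%MS)
  /\ \rank (powers_span p.+1 (Jmx F p.+1 *m B)) = p.+1.
Proof.
move=> Bsk [WH [M [P [Msp Mu HD szP]]]].
set J := Jmx F p.+1; set W := J *m B.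
have RP : Reg P.
  move=> q /mxminpoly_min dq; have [->|q0] := eqVneq q 0; first by left.
  right; have := dvdp_leq q0 dq; rewrite size_mxminpoly.
  by move: szP; rewrite size_mxminpoly /= => ->.
have RPT : Reg P^T.
  move=> q; rewrite -horner_tr => /(congr1 trmx); rewrite trmxK trmx0; exact: RP.
have [w Kw] := cyc_ex RP.
have [w2 Kw2] := cyc_ex RPT.
have HDg : forall g, invmx M *m horner_mx W g *m M =
    block_mx (horner_mx P g) 0 0 (horner_mx P^T g).
  move=> g; rewrite -horner_mx_uconjC // HD.
  by have [s [/(_ erefl) s0 ->]] := horner_lt P 0 P^T g; rewrite s0.
have JW : J *m W = W^T *m J by exact: WH.
have memE : forall X, (mxvec X <= powers_span p.+1 W)%MS <->
    exists v : 'rV_p.+1, X = horner_mx W (rVpoly v).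
  move=> X; split.
    case/submxP => v Hv; exists v.
    by rewrite horner_rVpoly -[powers_mx _ _]/(powers_span p.+1 W) -Hv mxvecK.
  case=> v ->; rewrite horner_rVpoly vec_mxK.
  exact: submxMl.
split; last first.
  apply/eqP; change (row_free (powers_span p.+1 W)); rewrite -kermx_eq0.
  apply/rowV0P => v /sub_kermxP Hv.
  have : horner_mx W (rVpoly v) = 0.
    by rewrite horner_rVpoly -[powers_mx _ _]/(powers_span p.+1 W) Hv linear0.
  move=> /(congr1 (fun Z => invmx M *m Z *m M)); rewrite HDg mulmx0 mul0mx.
  move=> /(congr1 (@ulsubmx _ p.+1 p.+1 p.+1 p.+1)); rewrite block_mxKul.
  rewrite (_ : ulsubmx 0 = 0); last by apply/matrixP => i j; rewrite !mxE.
  case/RP => [|]; first by move=> /(congr1 (@poly_rV _ p.+1)); rewrite rVpolyK linear0.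
  by rewrite ltnNge size_poly.
move=> X; split; last first.
  case/memE => v ->; set Y := horner_mx W (rVpoly v).
  have JY : J *m - (J *m Y) = Y by rewrite mulmxN mulmxA JJ mulNmx mul1mx opprK.
  exists (- (J *m Y)); split => //.
    rewrite /skew_sym linearN /= trmx_mul JtrE mulmxN opprK /Y horner_tr.
    by rewrite opprK skewH_horner.
  by rewrite JY /Y; apply: comm_horner_mx.
case=> A [Ask -> XW].
move: Msp; rewrite /symplectic -/J => Msp.
have invM : invmx M = - (J *m M^T *m J).
  have L : (- (J *m M^T *m J)) *m M = 1%:M.
    by rewrite mulNmx -!mulmxA (mulmxA M^T) Msp JJ opprK.
  by rewrite -[RHS](mulmxK Mu) L mul1mx.
pose A' := M^T *m A *m M.
have X'E : invmx M *m (J *m A) *m M = J *m A'.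
  rewrite invM !mulNmx -!mulmxA (mulmxA J J) JJ !mulNmx !mul1mx !mulmxN opprK.
  by rewrite /A' -!mulmxA.
have A'sk : A'^T = - A'.
  by rewrite /A' !trmx_mul trmxK Ask mulNmx mulmxN mulmxA.
have X'D : J *m A' *m block_mx P 0 0 P^T = block_mx P 0 0 P^T *m (J *m A').
  rewrite -X'E -HD !mulmxA !(mulmxK Mu).
  transitivity (invmx M *m (J *m A *m (J *m B)) *m M); first by rewrite !mulmxA.
  by rewrite XW !mulmxA.
have A'E : A' = block_mx (ulsubmx A') (ursubmx A') (dlsubmx A') (drsubmx A').
  by rewrite submxK.
move: (ulsubmx A') (ursubmx A') (dlsubmx A') (drsubmx A') A'E => a b c d A'E.
move: A'sk; rewrite A'E tr_block_mx opp_block_mx => /eq_block_mx [ea eb ec ed].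
have JA' : J *m A' = block_mx c d (- a) (- b).
  rewrite A'E /J /Jmx mulmx_block !mul0mx !add0r !addr0 !mul1mx !mulNmx !mul1mx.
  by [].
move: X'D; rewrite JA' !mulmx_block !mul0mx !mulmx0 !add0r !addr0.
move=> /eq_block_mx [e1 e2 e3 e4].
have [v cE] := com_poly Kw e1.
have d0 : d = 0 by apply: (skew0 Kw ed e2).
have a0 : a = 0.
  apply: (skew0 Kw2 ea); rewrite trmxK; apply: oppr_inj.
  by rewrite -mulNmx e3 mulmxN.
have bE : - b = (horner_mx P (rVpoly v))^T by rewrite -cE eb.
apply/memE; exists v; apply: (conj_inj Mu); rewrite X'E HDg JA' d0 a0 oppr0 bE.
by rewrite horner_tr cE.
Qed.
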